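(* Let $(X,\mathcal{M},\mu)$ be a measure space and $\Phi$ an $N^*$-function for which there is a constant $k\ge2$ with $\Phi(kx)=2\Phi(x)$ for all $x>0$. Then $\|f\|_\Phi=\inf\{\lambda>0:\int_X\Phi(|f|/\lambda)\,d\mu\le1\}$ is a quasi-norm on $L_\Phi(X)$: $\|f\|_\Phi=0$ iff $f=0$, $\|\alpha f\|_\Phi=|\alpha|\,\|f\|_\Phi$ for $\alpha\in\mathbb{R}$, and $\|f+g\|_\Phi\le k(\|f\|_\Phi+\|g\|_\Phi)$ for all $f,g\in L_\Phi(X)$.
   Context: An $N^*$-function is a function $\Phi:\mathbb{R}\to\mathbb{R}$ of the form $\Phi(x)=\int_0^{|x|}p(t)\,dt<+\infty$ for all $x$, where $p:[0,\infty)\to[0,\infty]$ is right-continuous, positive on $(0,\infty)$, non-increasing, and satisfies $\lim_{t\to0^+}p(t)=+\infty$ and $\lim_{t\to+\infty}p(t)=0$. $L_\Phi(X)$ is the space of (classes modulo a.e. equality of) measurable $f:X\to\mathbb{R}$ with $\int_X\Phi(f)\,d\mu<\infty$. *)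

(* Defs.v *)
From HB Require Import structures.
From mathcomp Require Import all_boot all_order all_algebra.
From mathcomp Require Import all_classical all_reals all_analysis.
Set Implicit Arguments. Unset Strict Implicit. Unset Printing Implicit Defensive.
Import Order.TTheory GRing.Theory Num.Theory.
Import numFieldNormedType.Exports.
Local Open Scope classical_set_scope.
Local Open Scope ring_scope.

(* The density p of an N*-function: p : [0,oo) -> [0,+oo] (values outside
   [0,oo) are irrelevant). *)
Definition Nstar_density (R : realType) (p : R -> \bar R) : Prop :=
  [/\ ((forall t, 0 <= t -> (0 <= p t)%E) /\
      (forall t, 0 < t -> (0 < p t)%E)),
      (forall s t, 0 <= s -> s <= t -> (p t <= p s)%E),
      (forall t, 0 <= t -> (p x @[x --> t^'+] --> p t)),
      (p x @[x --> 0^'+] --> +oo%E)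
    & (p x @[x --> +oo] --> 0%E)].

Definition Nstar_fun (R : realType) (Phi : R -> R) : Prop :=
  exists p : R -> \bar R, Nstar_density p /\
    forall x : R,
      (Phi x)%:E = (\int[@lebesgue_measure R]_(t in `[0%R, `|x|%R]) p t)%E.

(* Membership in L_Phi(X) (representatives of classes). *)
Definition in_LPhi d (T : measurableType d) (R : realType)
    (mu : {measure set T -> \bar R}) (Phi : R -> R) (f : T -> R) : Prop :=
  measurable_fun setT f /\ (\int[mu]_x (Phi (f x))%:E < +oo)%E.

Definition Phi_norm d (T : measurableType d) (R : realType)
    (mu : {measure set T -> \bar R}) (Phi : R -> R) (f : T -> R) : \bar R :=
  ereal_inf [set l%:E | l in
    [set l : R | 0 < l /\ (\int[mu]_x (Phi (`|f x| / l))%:E <= 1)%E]].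

(* Main.v *)
Require Import Defs.
From HB Require Import structures.
From mathcomp Require Import all_boot all_order all_algebra.
From mathcomp Require Import all_classical all_reals all_analysis.
From mathcomp Require Import measurable_realfun ring lra.
Import Order.TTheory GRing.Theory Num.Theory.
Import numFieldNormedType.Exports.
Set Implicit Arguments. Unset Strict Implicit.
Local Open Scope classical_set_scope.
Local Open Scope ring_scope.


Lemma le_integral_nm d (T : measurableType d) (R : realType)
  (mu : {measure set T -> \bar R}) (D : set T) (f g : T -> \bar R) :
  (forall x, D x -> (0 <= f x)%E) -> (forall x, D x -> (f x <= g x)%E) ->
  (\int[mu]_(x in D) f x <= \int[mu]_(x in D) g x)%E.
Proof.
move=> f0 fg.
have g0 : forall x, D x -> (0 <= g x)%E by move=> x Dx; exact: le_trans (f0 x Dx) (fg x Dx).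
rewrite (ge0_integralE _ f0) (ge0_integralE _ g0).
apply: ereal_sup_le => _ [h hf <-]; exists h => // x.
exact: le_trans (hf x) (lee_restrict fg x).
Qed.

Section phi.
Context (R : realType) (Phi : R -> R) (hPhi : Nstar_fun Phi).

Lemma Phi_abs x : Phi x = Phi `|x|.
Proof.
case: hPhi => p [_ hp]; apply/eqP; rewrite -eqe hp hp normr_id //.
Qed.

Lemma Phi_ge0 x : 0 <= Phi x.
Proof.
case: hPhi => p [[[p0 _] _ _ _ _] hp]; rewrite -lee_fin hp.
apply: integral_ge0 => t /=; rewrite in_itv /= => /andP[t0 _]; exact: p0.
Qed.

Lemma Phi_mono x y : 0 <= x -> x <= y -> Phi x <= Phi y.
Proof.
move=> x0 xy; case: hPhi => p [[[p0 _] _ _ _ _] hp]; rewrite -lee_fin !hp.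
rewrite integral_mkcond [X in (_ <= X)%E]integral_mkcond.
apply: le_integral_nm => t _; rewrite /patch.
  by case: ifP => // /set_mem /=; rewrite in_itv /= => /andP[t0 _]; exact: p0.
case: ifP => [/set_mem /= ht|_]; last first.
  by case: ifP => // /set_mem /=; rewrite in_itv /= => /andP[t0 _]; exact: p0.
rewrite ifT //; apply/mem_set; move: ht; rewrite /= !in_itv /= => /andP[-> ty] /=.
rewrite (le_trans ty) // !ger0_norm // (le_trans x0 xy) //.
Qed.

Lemma Phi0 : Phi 0 = 0.
Proof.
apply/eqP; rewrite eq_le Phi_ge0 andbT.
case: hPhi => p [[[p0 _] _ _ _ _] hp]; rewrite -lee_fin hp normr0.
have m0 : measurable (`[0, 0] : set R) by [].
have H := @le_integral_nm _ _ _ (@lebesgue_measure R) `[0%R, 0%R] p (cst +oo%E).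
apply: le_trans (H _ _) _.
  - by move=> t /=; rewrite in_itv /= => /andP[t0 _]; exact: p0.
  - by move=> t _; rewrite leey.
have L0 := (@lebesgue_measure_itv R `[0%R, 0%R]); rewrite /= ltxx in L0.
rewrite integral_cst // [X in (_ * X)%E](_ : _ = 0%E) ?mule0 //; exact: L0.
Qed.

Lemma Phi_pos x : 0 < x -> 0 < Phi x.
Proof.
move=> x0; case: hPhi => p [[[p0 pp] pni _ _ _] hp].
have [c c0 hc] : exists2 c : R, 0 < c & forall t, 0 <= t <= x -> (c%:E <= p t)%E.
  have := pp x x0; case E : (p x) => [r| |] //.
    move=> r0; exists r => // t /andP[t0 tx]; rewrite -E; exact: pni.
  move=> _; exists 1 => // t /andP[t0 tx].
  by have := pni _ _ t0 tx; rewrite E leye_eq => /eqP ->; rewrite leey.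
rewrite -lte_fin hp ger0_norm ?(ltW x0) //.
have H := @le_integral_nm _ _ _ (@lebesgue_measure R) `[0%R, x] (cst c%:E) p.
apply: lt_le_trans (H _ _).
- have L1 := (@lebesgue_measure_itv R `[0%R, x]); rewrite /= lte_fin x0 in L1.
  rewrite integral_cst // [X in (_ * X)%E](_ : _ = x%:E); last first.
    by rewrite sube0 in L1; exact: L1.
  by rewrite -EFinM lte_fin mulr_gt0.
- by move=> t _; rewrite lee_fin ltW.
- move=> t /=; rewrite in_itv /=; exact: hc.
Qed.

Lemma Phi_meas d (T : measurableType d) (h : T -> R) :
  measurable_fun setT h -> (forall t, 0 <= h t) ->
  measurable_fun setT (fun t => (Phi (h t))%:E).
Proof.
move=> mh h0.
have mP : measurable_fun setT (fun y : R => Phi (Num.max y 0)).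
  apply: nondecreasing_measurable => // a b ab.
  apply: Phi_mono; first by rewrite le_max lexx orbT.
  by rewrite le_max2 // lexx.
have -> : (fun t => (Phi (h t))%:E) = (fun t => (Phi (Num.max (h t) 0))%:E).
  by apply/funext => t; rewrite max_l.
apply/measurable_EFinP; exact: (measurableT_comp mP mh).
Qed.
End phi.


Definition Lset d (T : measurableType d) (R : realType)
    (mu : {measure set T -> \bar R}) (Phi : R -> R) (f : T -> R) :=
  [set l : R | 0 < l /\ (\int[mu]_x (Phi (`|f x| / l))%:E <= 1)%E].

Lemma tri_mem d (T : measurableType d) (R : realType)
    (mu : {measure set T -> \bar R}) (Phi : R -> R) (k : R) (f g : T -> R) l m :
  Nstar_fun Phi -> 2 <= k ->
  (forall x : R, 0 < x -> Phi (k * x) = 2 * Phi x) ->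
  measurable_fun setT f -> measurable_fun setT g ->
  Lset mu Phi f l -> Lset mu Phi g m -> Lset mu Phi (fun x => f x + g x) (k * (l + m)).
Proof.
move=> hP k2 hk mf mg [l0 hl] [m0 hm].
have k0 : 0 < k by apply: lt_le_trans k2.
have c0 : 0 < l + m by rewrite addr_gt0.
split; first by rewrite mulr_gt0.
have mh (h : T -> R) (c : R) : 0 <= c -> measurable_fun setT h ->
    measurable_fun setT (fun x => (Phi (`|h x| / c))%:E).
  move=> cc mh; apply: Phi_meas => //; last by move=> t; rewrite divr_ge0.
  apply: measurable_funM; last exact: measurable_cst.
  exact: measurableT_comp (@normr_measurable _ _) mh.
have pw x : Phi (`|f x + g x| / (k * (l + m))) <=
    2^-1 * Phi (`|f x| / l) + 2^-1 * Phi (`|g x| / m).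
  set w := `|f x + g x|; set u := `|f x| / l; set v := `|g x| / m.
  have w0 : 0 <= w by exact: normr_ge0.
  have u0 : 0 <= u by rewrite divr_ge0 // ltW.
  have v0 : 0 <= v by rewrite divr_ge0 // ltW.
  have e1 : Phi (w / (k * (l + m))) = 2^-1 * Phi (w / (l + m)).
    have [->|wp] := eqVneq w 0.
      by rewrite !mul0r (Phi0 hP) mulr0.
    have wp' : 0 < w by rewrite lt_def wp.
    have := hk (w / (k * (l + m))) (divr_gt0 wp' (mulr_gt0 k0 c0)).
    have -> : k * (w / (k * (l + m))) = w / (l + m).
      by field; apply/andP; split; rewrite gt_eqF.
    move=> ->; rewrite mulrA mulVf ?mul1r //.
  rewrite e1 -mulrDr ler_wpM2l //.
  have le1 : w / (l + m) <= Num.max u v.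
    rewrite ler_pdivrMr //.
    have hfu : `|f x| = l * u by rewrite /u mulrC -mulrA mulVf ?mulr1 // gt_eqF.
    have hgv : `|g x| = m * v by rewrite /v mulrC -mulrA mulVf ?mulr1 // gt_eqF.
    apply: le_trans (ler_normD _ _) _; rewrite hfu hgv mulrDr [X in _ <= X + _]mulrC.
    rewrite [X in _ <= _ + X]mulrC; apply: lerD; apply: ler_wpM2l;
      [exact: ltW | by rewrite le_max lexx | exact: ltW | by rewrite le_max; apply/orP; right].
  have wc0 : 0 <= w / (l + m) by rewrite divr_ge0 // ltW.
  apply: le_trans (Phi_mono hP wc0 le1) _.
  rewrite /Num.max; case: ifP => _.
    by rewrite lerDr Phi_ge0.
  by rewrite lerDl Phi_ge0.
have mu_ := mh f l (ltW l0) mf; have mv := mh g m (ltW m0) mg.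
have H := @le_integral_nm _ _ _ mu setT
  (fun x => (Phi (`|f x + g x| / (k * (l + m))))%:E)
  (fun x => (2^-1 * Phi (`|f x| / l))%:E + (2^-1 * Phi (`|g x| / m))%:E).
apply: le_trans (H _ _) _.
- by move=> x _; rewrite lee_fin Phi_ge0.
- by move=> x _; rewrite -EFinD lee_fin pw.
have h2 : (0 <= 2^-1 :> R) by rewrite invr_ge0.
rewrite ge0_integralD //; first last.
- by apply/measurable_EFinP; apply: measurable_funM; [exact: measurable_cst|
    exact/measurable_EFinP].
- by move=> x _; rewrite lee_fin mulr_ge0 // Phi_ge0.
- by apply/measurable_EFinP; apply: measurable_funM; [exact: measurable_cst|
    exact/measurable_EFinP].
- by move=> x _; rewrite lee_fin mulr_ge0 // Phi_ge0.
under eq_integral do rewrite EFinM.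
under [X in (_ + X)%E]eq_integral do rewrite EFinM.
rewrite ge0_integralZl_EFin //; last by move=> x _; rewrite lee_fin Phi_ge0.
rewrite ge0_integralZl_EFin //; last by move=> x _; rewrite lee_fin Phi_ge0.
apply: le_trans (leeD (lee_wpmul2l _ hl) (lee_wpmul2l _ hm)) _;
  rewrite ?lee_fin //.
by rewrite mulr1; lra.
Qed.


Lemma norm_ge0 d (T : measurableType d) (R : realType)
    (mu : {measure set T -> \bar R}) (Phi : R -> R) (f : T -> R) :
  (0 <= Phi_norm mu Phi f)%E.
Proof.
by apply: le_ereal_inf_tmp => _ [l [l0 _] <-]; rewrite lee_fin ltW.
Qed.

Lemma norm0_of d (T : measurableType d) (R : realType)
    (mu : {measure set T -> \bar R}) (Phi : R -> R) (f : T -> R) :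
  (forall l, 0 < l -> (\int[mu]_x (Phi (`|f x| / l))%:E <= 1)%E) ->
  Phi_norm mu Phi f = 0%E.
Proof.
move=> H; apply/eqP; rewrite eq_le norm_ge0 andbT.
apply/lee_addgt0Pr => e e0; rewrite add0e; apply: ge_ereal_inf.
by exists e%:E => //; exists e => //; split => //; exact: H.
Qed.

Lemma normZ d (T : measurableType d) (R : realType)
    (mu : {measure set T -> \bar R}) (Phi : R -> R) (f : T -> R) (a : R) :
  a != 0 ->
  Phi_norm mu Phi (fun x => a * f x) = (`|a|%:E * Phi_norm mu Phi f)%E.
Proof.
move=> a0; have a0' : 0 < `|a| by rewrite normr_gt0.
rewrite /Phi_norm -ereal_inf_pZl //; congr ereal_inf.
apply/seteqP; split.
- move=> _ [l [l0 hl] <-]; exists (l / `|a|)%:E; last first.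
    by rewrite -EFinM; congr EFin; field; rewrite gt_eqF.
  exists (l / `|a|) => //; split; first by rewrite divr_gt0.
  apply: le_trans hl; rewrite le_eqVlt; apply/orP; left; apply/eqP.
  apply: eq_integral => x _; congr (EFin (Phi _)); rewrite normrM.
  by field; apply/andP; split; rewrite gt_eqF.
- move=> _ [_ [l [l0 hl] <-] <-]; exists (`|a| * l); last by rewrite EFinM.
  split; first by rewrite mulr_gt0.
  apply: le_trans hl; rewrite le_eqVlt; apply/orP; left; apply/eqP.
  apply: eq_integral => x _; congr (EFin (Phi _)); rewrite normrM.
  by field; apply/andP; split; rewrite gt_eqF.
Qed.

Lemma Phi_pow (R : realType) (Phi : R -> R) (k : R) :
  0 < k -> (forall x : R, 0 < x -> Phi (k * x) = 2 * Phi x) ->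
  forall m y, 0 < y -> Phi (k ^+ m * y) = 2 ^+ m * Phi y.
Proof.
move=> k0 hk; elim=> [|m IH] y y0; first by rewrite !expr0 !mul1r.
rewrite !exprS -mulrA hk ?IH ?mulrA // mulr_gt0 // exprn_gt0 //.
Qed.

Lemma meas_E0 d (T : measurableType d) (R : realType)
    (mu : {measure set T -> \bar R}) (Phi : R -> R) (k : R) (f : T -> R) (dl : R) :
  Nstar_fun Phi -> 2 <= k ->
  (forall x : R, 0 < x -> Phi (k * x) = 2 * Phi x) ->
  measurable_fun setT f -> Phi_norm mu Phi f = 0%E -> 0 < dl ->
  mu [set x | dl < `|f x|] = 0%E.
Proof.
move=> hP k2 hk mf n0 dl0.
have k0 : 0 < k by apply: lt_le_trans k2.
set E := [set x | dl < `|f x|].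
have mE : measurable E.
  have mn : measurable_fun setT (fun x => `|f x|).
    exact: measurableT_comp (@normr_measurable _ _) mf.
  have := mn measurableT `]dl, +oo[%classic (measurable_itv _).
  rewrite setTI; congr measurable; apply/seteqP; split => x /=;
    by rewrite in_itv /= andbT.
apply/eqP; rewrite eq_le measure_ge0 andbT.
apply/lee_addgt0Pr => e e0; rewrite add0e.
set c := Phi 1.
have c0 : 0 < c by apply: Phi_pos.
set m := (Num.truncn ((e * c)^-1)).+1.
have hm : 1 <= e * (2 ^+ m * c).
  have h1 := truncnS_gt ((e * c)^-1); rewrite -/m in h1.
  have h2 : (m%:R : R) <= 2 ^+ m.
    by rewrite -natrX ler_nat ltnW // ltn_expl.
  have h3 : (e * c)^-1 <= 2 ^+ m by apply: le_trans (ltW h1) h2.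
  have ec0 : 0 < e * c by rewrite mulr_gt0.
  have := ler_wpM2r (ltW ec0) h3; rewrite mulVf ?gt_eqF //.
  by rewrite mulrCA.
have km0 : 0 < dl / k ^+ m by rewrite divr_gt0 // exprn_gt0.
have hlt : (Phi_norm mu Phi f < (dl / k ^+ m)%:E)%E by rewrite n0 lte_fin.
have [_ [l [l0 hl] <-] ll] := ereal_inf_lt hlt.
rewrite lte_fin in ll.
have hM : ((2 ^+ m * c)%:E * mu E <= 1)%E.
  rewrite -integral_cst //; apply: le_trans hl.
  rewrite integral_mkcond.
  apply: le_integral_nm => x _; rewrite /patch /cst.
    by case: ifP => _; rewrite // lee_fin mulr_ge0 ?exprn_ge0 ?ltW.
  case: ifP => [/set_mem /= Ex|_]; last by rewrite lee_fin Phi_ge0.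
  rewrite lee_fin -(Phi_pow k0 hk m ltr01) mulr1.
  apply: Phi_mono => //; first by rewrite exprn_ge0 ?ltW.
  rewrite ler_pdivlMr //; apply: ltW; apply: le_lt_trans _ Ex.
  by move: ll; rewrite ltr_pdivlMr ?exprn_gt0 // mulrC => /ltW.
move: hM; have := measure_ge0 mu E; case: (mu E) => [r| |] //.
  rewrite !lee_fin => r0 hr; nra.
by move=> _; rewrite mulry gtr0_sg ?mul1e ?mulr_gt0 ?exprn_gt0.
by move=> _ _; rewrite leNye.
Qed.

Lemma norm0_ae d (T : measurableType d) (R : realType)
    (mu : {measure set T -> \bar R}) (Phi : R -> R) (k : R) (f : T -> R) :
  Nstar_fun Phi -> 2 <= k ->
  (forall x : R, 0 < x -> Phi (k * x) = 2 * Phi x) ->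
  measurable_fun setT f -> Phi_norm mu Phi f = 0%E -> f = (fun _ => 0) %[ae mu].
Proof.
move=> hP k2 hk mf n0.
have mn : measurable_fun setT (fun x => `|f x|).
  exact: measurableT_comp (@normr_measurable _ _) mf.
have N : mu.-negligible (\bigcup_n [set x | (n.+1%:R)^-1 < `|f x|]).
  apply: negligible_bigcup => n; exists [set x | (n.+1%:R : R)^-1 < `|f x|].
  split; [ | by apply: (meas_E0 hP k2 hk mf n0); rewrite invr_gt0 | by []].
  have := mn measurableT `](n.+1%:R : R)^-1, +oo[%classic (measurable_itv _).
  rewrite setTI; congr measurable; apply/seteqP; split => x /=;
    by rewrite in_itv /= andbT.
apply: negligibleS N => x /= hx.
have fx : f x != 0 by apply/eqP => fx0; apply: hx => _.
have fx0 : 0 < `|f x| by rewrite normr_gt0.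
exists (Num.truncn (`|f x|^-1)) => //=.
rewrite invf_plt ?posrE //; exact: truncnS_gt.
Qed.

Unset Implicit Arguments. Set Strict Implicit.

Theorem mainTheorem10 (d : measure_display) (T : measurableType d)
    (R : realType) (mu : {measure set T -> \bar R}) (Phi : R -> R) (k : R) :
  Nstar_fun Phi ->
  2 <= k ->
  (forall x : R, 0 < x -> Phi (k * x) = 2 * Phi x) ->
  [/\ (forall f : T -> R, in_LPhi mu Phi f ->
         Phi_norm mu Phi f = 0%E <-> f = (fun _ => 0) %[ae mu]),
      (forall (f : T -> R) (a : R), in_LPhi mu Phi f ->
         Phi_norm mu Phi (fun x => (a * f x)%R) = (`|a|%:E * Phi_norm mu Phi f)%E)
    & (forall f g : T -> R, in_LPhi mu Phi f -> in_LPhi mu Phi g ->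
         (Phi_norm mu Phi (fun x => (f x + g x)%R)
            <= k%:E * (Phi_norm mu Phi f + Phi_norm mu Phi g))%E)].
Proof.
move=> hP k2 hk; have k0 : 0 < k by apply: lt_le_trans k2.
split.
- move=> f [mf _]; split; first exact: (norm0_ae hP k2 hk mf).
  move=> hf; apply: norm0_of => l l0.
  have mh := Phi_meas hP (h := fun x => `|f x| / l).
  rewrite (@ae_eq_integral _ _ _ mu setT (cst 0%E)) //.
  + by rewrite integral0_eq.
  + apply: mh; first last.
      by move=> t; apply: divr_ge0; [exact: normr_ge0 | exact: ltW].
    apply: measurable_funM; last exact: measurable_cst.
    exact: measurableT_comp (@normr_measurable _ _) mf.
  + apply: filterS hf => x hx Tx; rewrite hx // normr0 mul0r (Phi0 hP).
    reflexivity.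
- move=> f a _; have [->|a0] := eqVneq a 0.
    rewrite normr0 mul0e; apply: norm0_of => l l0.
    rewrite integral0_eq ?lee01 // => x _.
    by rewrite mul0r normr0 mul0r (Phi0 hP).
  exact: normZ.
- move=> f g [mf _] [mg _].
  have nf0 := norm_ge0 mu Phi f; have ng0 := norm_ge0 mu Phi g.
  move: nf0 ng0; case Ef : (Phi_norm mu Phi f) => [r| |] //; last first.
    move=> _ ng0; have gNy : Phi_norm mu Phi g != -oo%E.
      by rewrite gt_eqF // (lt_le_trans _ ng0) // ltNyr.
    by rewrite addye // gt0_muley ?lte_fin // leey.
  case Eg : (Phi_norm mu Phi g) => [s| |] //; last first.
    by move=> _ _; rewrite addey // gt0_muley ?lte_fin // leey.
  rewrite !lee_fin => r0 s0.
  apply/lee_addgt0Pr => e e0.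
  set eps := e / (2 * k).
  have eps0 : 0 < eps by rewrite divr_gt0 // mulr_gt0.
  have hf : (Phi_norm mu Phi f < (r + eps)%:E)%E by rewrite Ef lte_fin ltrDl.
  have hg : (Phi_norm mu Phi g < (s + eps)%:E)%E by rewrite Eg lte_fin ltrDl.
  have [_ [l hl <-] ll] := ereal_inf_lt hf.
  have [_ [m hm <-] mm] := ereal_inf_lt hg.
  rewrite lte_fin in ll; rewrite lte_fin in mm.
  have := tri_mem hP k2 hk mf mg hl hm => hfg.
  apply: ge_ereal_inf; exists (k * (l + m))%:E; first by exists (k * (l + m)).
  have -> : (k%:E * (r%:E + s%:E) + e%:E)%E = (k * (r + s) + e)%:E by rewrite EFinD EFinM EFinD.
  rewrite lee_fin.
  have : k * (l + m) <= k * (r + s + 2 * eps).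
    by apply: ler_wpM2l; [exact: ltW | lra].
  move=> h; apply: le_trans h _; rewrite /eps.
  have -> : k * (r + s + 2 * (e / (2 * k))) = k * (r + s) + e.
    by field; rewrite gt_eqF.
  by [].
Qed.
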